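(* If $G$ is an optimal digraph on $n$ vertices, then $\beta_G < n/2$.
   Context: Digraphs are finite, loopless, with at most one edge $uv$ per ordered pair. A digraph is $2$-free if no distinct $u,v$ have both $uv,vu$ as edges. A circular interval digraph is a digraph together with a fixed arrangement of its vertices in a circle such that for all distinct $u,v,w$ in clockwise order with $uw\in E(G)$, also $uv,vw\in E(G)$. For distinct $u,v$, $d(u,v) = 1 + |\{w: u,w,v \text{ distinct, in clockwise order}\}|$; this is the length of the ordered pair $uv$. A non-edge is an ordered pair $(u,v)$ of distinct vertices with neither $uv$ nor $vu$ an edge; its length is $d(u,v)$. $\alpha_G$ is the minimum length of a non-edge ($\infty$ if there is none) and $\beta_G$ the maximum length of an edge ($0$ if there is none). $\xi(G)$ is the number of pairs $(uv,(w,x))$ with $uv\in E(G)$, $(w,x)$ a non-edge, and $d(u,v)>d(w,x)$. $\tilde P_3(G)$ is the number of triples $(a,b,c)$ of distinct vertices with $ab,bc\in E(G)$ and $ac,ca\notin E(G)$. For fixed $n\ge 4$, $G$ is optimal if it is a $2$-free circular interval digraph on $n$ vertices that maximizes $\tilde P_3$ among all $2$-free circular interval digraphs on $n$ vertices and, subject to this, minimizes $\xi(G)$. *)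

(* Defs.v *)
From mathcomp Require Import all_boot all_order.
Set Implicit Arguments. Unset Strict Implicit. Unset Printing Implicit Defensive.

(* Vertices of a digraph on n vertices are 'I_n; the fixed circular
   arrangement is the cyclic order 0, 1, ..., n-1 (clockwise).
   A digraph is a relation E : rel 'I_n (E u v = "uv is an edge"). *)

Section Circ.
Variable n : nat.
Implicit Types (E : rel 'I_n) (u v w : 'I_n).

(* d(u,v) = 1 + #{w : u,w,v distinct in clockwise order} = (v - u) mod n *)
Definition cdist u v : nat := (v + n - u) %% n.

Definition clockwise u v w : bool :=
  [&& u != v, v != w, u != w & cdist u v < cdist u w].

Definition loopless E : Prop := forall u, ~~ E u u.

Definition two_free E : Prop := forall u v, u != v -> ~~ (E u v && E v u).

Definition circ_interval E : Prop :=
  forall u v w, clockwise u v w -> E u w -> E u v && E v w.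

Definition admissible E : Prop := [/\ loopless E, two_free E & circ_interval E].

Definition nonedge E u v : bool := [&& u != v, ~~ E u v & ~~ E v u].

(* beta_G : maximum length of an edge, 0 if none *)
Definition beta E : nat := \max_(p : 'I_n * 'I_n | E p.1 p.2) cdist p.1 p.2.

Definition xi E : nat :=
  #|[pred q : ('I_n * 'I_n) * ('I_n * 'I_n) |
      [&& E q.1.1 q.1.2, nonedge E q.2.1 q.2.2 &
          cdist q.2.1 q.2.2 < cdist q.1.1 q.1.2]]|.

Definition P3t E : nat :=
  #|[pred t : 'I_n * 'I_n * 'I_n |
      [&& [&& t.1.1 != t.1.2, t.1.2 != t.2 & t.1.1 != t.2],
          E t.1.1 t.1.2, E t.1.2 t.2, ~~ E t.1.1 t.2 & ~~ E t.2 t.1.1]]|.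

Definition optimal E : Prop :=
  [/\ admissible E,
      (forall E', admissible E' -> P3t E' <= P3t E) &
      (forall E', admissible E' -> P3t E' = P3t E -> xi E <= xi E')].
End Circ.

(* Main.v *)
Require Import Defs.
From mathcomp Require Import all_boot all_order.
From mathcomp Require Import zify.
Set Implicit Arguments. Unset Strict Implicit. Unset Printing Implicit Defensive.


Lemma cdistE (n : nat) (u v : 'I_n) : cdist u v = if u <= v then v - u else v + n - u.
Proof.
rewrite /cdist; have hu := ltn_ord u; have hv := ltn_ord v.
case: leqP => h.
  have -> : v + n - u = (v - u) + n by lia.
  rewrite modnDr modn_small //; lia.
rewrite modn_small //; lia.
Qed.

Lemma cdist_lt (n : nat) (u v : 'I_n) : cdist u v < n.
Proof. rewrite cdistE; have := ltn_ord u; have := ltn_ord v => ? ?; case: (leqP u v) => *; lia. Qed.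

Lemma cdist0 (n : nat) (u v : 'I_n) : (cdist u v == 0) = (u == v).
Proof.
apply/eqP/eqP => [|->]; last by rewrite cdistE leqnn subnn.
rewrite cdistE; have := ltn_ord u; have := ltn_ord v => hv hu.
case: (leqP u v) => h e; apply/val_inj => /=; lia.
Qed.

Lemma cdist_inj (n : nat) (u x y : 'I_n) : cdist u x = cdist u y -> x = y.
Proof.
rewrite !cdistE; have := ltn_ord u; have := ltn_ord x; have := ltn_ord y.
move=> hy hx hu; case: (leqP u x) => h1; case: (leqP u y) => h2 e; apply/val_inj => /=; lia.
Qed.

Lemma cdist_sum (n : nat) (x v z : 'I_n) :
  cdist x v + cdist v z = cdist x z \/ cdist x v + cdist v z = cdist x z + n.
Proof.
rewrite !cdistE; have := ltn_ord x; have := ltn_ord v; have := ltn_ord z.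
move=> hz hv hx; case: (leqP x v) => ?; case: (leqP v z) => ?; case: (leqP x z) => ?; lia.
Qed.

Lemma cdist_sym (n : nat) (u v : 'I_n) : u != v -> cdist u v + cdist v u = n.
Proof.
move=> /eqP ne.
have ne' : nat_of_ord u <> nat_of_ord v by move=> e; apply: ne; apply/val_inj.
rewrite !cdistE; have := ltn_ord u; have := ltn_ord v.
move=> hv hu; case: (leqP u v) => ?; case: (leqP v u) => ?; lia.
Qed.

Definition sh (n : nat) (n0 : 0 < n) (u : 'I_n) (j : nat) : 'I_n := Ordinal (ltn_pmod (u + j) n0).

Lemma cdist_sh n (n0 : 0 < n) (u : 'I_n) j : j < n -> cdist u (sh n0 u j) = j.
Proof.
move=> hj; rewrite cdistE /=; have hu := ltn_ord u.
case: (leqP n (u + j)) => h.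
  have -> : u + j = (u + j - n) + n by lia.
  rewrite modnDr modn_small; last lia.
  case: leqP => *; lia.
rewrite modn_small //; case: leqP => *; lia.
Qed.

Definition P3p (n : nat) (E : rel 'I_n) (t : 'I_n * 'I_n * 'I_n) : bool :=
  [&& [&& t.1.1 != t.1.2, t.1.2 != t.2 & t.1.1 != t.2],
          E t.1.1 t.1.2, E t.1.2 t.2, ~~ E t.1.1 t.2 & ~~ E t.2 t.1.1].

Lemma P3tE n (E : rel 'I_n) : P3t E = #|[pred t | P3p E t]|.
Proof. by []. Qed.

Definition Qp (n : nat) (E : rel 'I_n) (q : ('I_n * 'I_n) * ('I_n * 'I_n)) : bool :=
  [&& E q.1.1 q.1.2, nonedge E q.2.1 q.2.2 & cdist q.2.1 q.2.2 < cdist q.1.1 q.1.2].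

Lemma xiE n (E : rel 'I_n) : xi E = #|[pred q | Qp E q]|.
Proof. by []. Qed.

Theorem mainTheorem4 (n : nat) (hn : 4 <= n) (E : rel 'I_n) :
  optimal E -> (beta E).*2 < n.
Proof.
case=> [[ll tf ci] maxP minxi].
have n0 : 0 < n by lia.
case: (pickP [pred p : 'I_n * 'I_n | E p.1 p.2]) => [p0 Ep0|none]; last first.
  rewrite /beta big_pred0 //; lia.
have [[u w] /= Euw bE] : {p : 'I_n * 'I_n | E p.1 p.2 & beta E = cdist p.1 p.2}.
  have [|p] := @eq_bigmax_cond _ [pred p : 'I_n * 'I_n | E p.1 p.2]
                 (fun p => cdist p.1 p.2).
    by apply/card_gt0P; exists p0.
  by rewrite inE => Ep e; exists p.
have Hmax : forall x y, E x y -> cdist x y <= cdist u w.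
  move=> x y h; rewrite -bE /beta.
  exact: (@leq_bigmax_cond _ [pred p : 'I_n * 'I_n | E p.1 p.2] (fun p => cdist p.1 p.2) (x, y)).
rewrite bE; have [k kE] : exists k, cdist u w = k by eexists.
rewrite kE in Hmax *.
case: (ltnP k.*2 n) => // hk; exfalso.
have uw : u != w by apply/eqP => e; move: (ll u); rewrite {2}e Euw.
have kpos : 0 < k by rewrite -kE lt0n cdist0.
have kn : k < n by rewrite -kE cdist_lt.
have nwu : ~~ E w u by move: (tf u w uw); rewrite Euw.
have int : forall v, 0 < cdist u v < k -> E u v && E v w.
  move=> v /andP[h1 h2]; apply: ci => //; rewrite /clockwise.
  apply/and4P; split.
  - by rewrite -cdist0 -lt0n.
  - by apply/eqP => e; rewrite e in h2; lia.
  - exact: uw.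
  - by rewrite kE.
have hk2 : 1 < k by lia.
pose E' : rel 'I_n := fun x y => E x y && ~~ ((x == u) && (y == w)).
have admE' : admissible E'.
  split.
  - by move=> x; rewrite /E' (negbTE (ll x)).
  - move=> x y xy; apply/negP => /andP[/andP[h1 _] /andP[h2 _]].
    by move: (tf x y xy); rewrite h1 h2.
  - move=> x v z cw /andP[Exz _].
    have /andP[Exv Evz] := ci x v z cw Exz.
    move: cw => /and4P[xv vz xz lt].
    rewrite /E' Exv Evz /=; apply/andP; split.
    + apply/negP => /andP[/eqP ex /eqP ev]; subst x v.
      have := Hmax _ _ Exz; lia.
    + apply/negP => /andP[/eqP ev /eqP ez]; subst v z.
      have := Hmax _ _ Exz; have := cdist_lt x w; have := cdist_lt u w.
      have : 0 < cdist x u by rewrite lt0n cdist0.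
      case: (cdist_sum x u w); move: lt kE; clear; lia.
have Achar : forall t, P3p E t -> ~~ P3p E' t ->
    (t.1.1 = u /\ t.1.2 = w) \/ (t.1.2 = u /\ t.2 = w).
  case=> [[a b] c]; rewrite /P3p /E' /= => /and5P[d eab ebc nac nca].
  case: (boolP ((a == u) && (b == w))) => [/andP[/eqP-> /eqP->]|h1]; first by left.
  case: (boolP ((b == u) && (c == w))) => [/andP[/eqP-> /eqP->]|h2]; first by right.
  by rewrite d eab ebc (negbTE nac) (negbTE nca).
pose oth (t : 'I_n * 'I_n * 'I_n) := if t.1.1 == u then t.2 else t.1.1.
have Aprop : forall t, P3p E t -> ~~ P3p E' t ->
   k < cdist u (oth t) /\
   ((E w (oth t) /\ t = (u, w, oth t)) \/ (~~ E w (oth t) /\ t = (oth t, u, w))).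
  move=> t h1 h2; case: (Achar t h1 h2) => [[e1 e2]|[e1 e2]]; clear h2.
    move: h1; case: t e1 e2 => [[a b] c] /= -> -> {a b}.
    rewrite /oth /= eqxx => /and5P[/and3P[_ wc uc] _ Ewc nuc ncu].
    split; last by left.
    rewrite ltnNge; apply/negP => hle.
    have : 0 < cdist u c by rewrite lt0n cdist0.
    rewrite leq_eqVlt in hle; case/orP: hle => [/eqP e|lt] h0.
      by move: wc; rewrite (cdist_inj (etrans e (esym kE))) eqxx.
    by move: nuc; have /andP[-> _] := int c (introT andP (conj h0 lt)).
  move: h1; case: t e1 e2 => [[a b] c] /= -> -> {b c}.
  move=> /and5P[/and3P[au _ aw] Eau _ naw nwa].
  rewrite /oth /= (negbTE au).
  split; last by right.
  rewrite ltnNge; apply/negP => hle.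
  have : 0 < cdist u a by rewrite lt0n cdist0 eq_sym.
  rewrite leq_eqVlt in hle; case/orP: hle => [/eqP e|lt] h0.
    by move: aw; rewrite (cdist_inj (etrans e (esym kE))) eqxx.
  by move: naw; have /andP[_ ->] := int a (introT andP (conj h0 lt)).
have gain : forall j, 0 < j < k ->
    P3p E' (u, sh n0 u j, w) && ~~ P3p E (u, sh n0 u j, w).
  move=> j /andP[j0 jk]; set b := sh n0 u j.
  have cb : cdist u b = j by rewrite cdist_sh //; lia.
  have ub : u != b by rewrite -cdist0 cb -lt0n.
  have bw : b != w by apply/eqP => e; move: cb; rewrite e kE; lia.
  have bu : (b == u) = false by rewrite eq_sym (negbTE ub).
  have /andP[Eub Ebw] : E u b && E b w by apply: int; rewrite cb j0 jk.
  by rewrite /P3p /E' /= ub bw uw Eub Ebw Euw bu !eqxx (negbTE nwu) (negbTE bw).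
pose Aset := [set t | P3p E t && ~~ P3p E' t].
pose Bset := [set t | P3p E' t && ~~ P3p E t].
pose psi (t : 'I_n * 'I_n * 'I_n) := (u, sh n0 u (cdist u (oth t) - k), w).
have jbound : forall t, t \in Aset ->
    k < cdist u (oth t) /\ cdist u (oth t) < n.
  move=> t; rewrite inE => /andP[a b]; have [h _] := Aprop t a b.
  by split => //; apply: cdist_lt.
have psiB : forall t, t \in Aset -> psi t \in Bset.
  move=> t ht; have [h1 h2] := jbound t ht; rewrite inE; apply: gain; lia.
have psi_inj : {in Aset &, injective psi}.
  move=> t1 t2 ht1 ht2 e.
  have [h1 h1'] := jbound t1 ht1; have [h2 h2'] := jbound t2 ht2.
  move: ht1 ht2; rewrite !inE => /andP[a1 b1] /andP[a2 b2].
  have [_ c1] := Aprop _ a1 b1; have [_ c2] := Aprop _ a2 b2.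
  move/(congr1 (fun t => cdist u t.1.2)): e; rewrite /= !cdist_sh; try (move: h1' h2'; clear; lia); move=> ej.
  have eo : oth t1 = oth t2 by apply: (@cdist_inj _ u); move: ej h1 h2; clear; lia.
  case: c1 => [[w1 e1]|[w1 e1]]; case: c2 => [[w2 e2]|[w2 e2]];
    rewrite e1 e2 eo //.
  - by move: w2; rewrite -eo w1.
  - by move: w1; rewrite eo w2.
have c1 : P3t E = #|[set t | P3p E t && P3p E' t]| + #|Aset|.
  rewrite P3tE -(cardID [pred t | P3p E' t] [pred t | P3p E t]).
  by congr (_ + _); apply: eq_card => t; rewrite !inE // andbC.
have c2 : P3t E' = #|[set t | P3p E t && P3p E' t]| + #|Bset|.
  rewrite P3tE -(cardID [pred t | P3p E t] [pred t | P3p E' t]).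
  by congr (_ + _); apply: eq_card => t; rewrite !inE // andbC.
have sub : [set psi t | t in Aset] \subset Bset.
  by apply/subsetP => y /imsetP[t ht ->]; exact: psiB.
have P3le : P3t E <= P3t E'.
  by rewrite c1 c2 leq_add2l -(card_in_imset psi_inj) subset_leq_card.
have strict : (exists2 y, y \in Bset & y \notin [set psi t | t in Aset]) ->
    P3t E < P3t E'.
  move=> ex; rewrite c1 c2 ltn_add2l -(card_in_imset psi_inj).
  by apply: proper_card; apply/properP; split.
have noStrict : ~ (P3t E < P3t E') by have := maxP _ admE'; lia.
have psi1 : forall t, (psi t).1.1 = u by [].
have psi2 : forall t, t \in Aset -> cdist u (psi t).1.2 = cdist u (oth t) - k.
  move=> t ht; have [h1 h2] := jbound t ht; rewrite /psi /= cdist_sh //; lia.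
case: (ltnP n k.*2) => hk3.
  apply: noStrict; apply: strict.
  exists (u, sh n0 u k.-1, w); first by rewrite inE; apply: gain; lia.
  apply/imsetP => -[t ht e].
  have := psi2 t ht; rewrite -e /= cdist_sh; last lia.
  have [h1 h2] := jbound t ht; lia.
have hkn : k.*2 = n by lia.
have [x0 cx0] : exists x0, cdist u x0 = k.+1.
  by exists (sh n0 u k.+1); rewrite cdist_sh //; lia.
have x0u : x0 != u by rewrite eq_sym -cdist0 cx0.
have wx0 : w != x0 by apply/eqP => e; move: cx0; rewrite -e kE; lia.
have cwx0 : cdist w x0 = 1.
  have := cdist_lt w x0; case: (cdist_sum u w x0); rewrite kE cx0; clear; lia.
have cx0w : cdist x0 w = n.-1 by have := cdist_sym wx0; rewrite cwx0; clear; lia.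
have cx0u : cdist x0 u = k.-1 by have := cdist_sym x0u; rewrite cx0; move: hkn; clear; lia.
have nux0 : ~~ E u x0 by apply/negP => h; have := Hmax _ _ h; rewrite cx0; clear; lia.
have nx0w : ~~ E x0 w by apply/negP => h; have := Hmax _ _ h; rewrite cx0w; move: hkn hk2; clear; lia.
case: (boolP (E x0 u && E w x0)) => [/andP[ex0u ewx0]|hne].
  apply: noStrict; apply: strict.
  exists (w, x0, u).
    rewrite inE /P3p /E' /= wx0 x0u ex0u ewx0 (negbTE nwu) Euw.
    by rewrite (eq_sym w u) (negbTE uw) (negbTE x0u) !eqxx.
  apply/imsetP => -[t _ e].
  have /= ewu := congr1 (fun t => t.1.1) e.
  by move: uw; rewrite ewu eqxx.
have [f0 hf0] : exists f0 : 'I_n * 'I_n,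
    nonedge E f0.1 f0.2 && (cdist f0.1 f0.2 < k).
  case: (boolP (E x0 u)) => ex0u.
    have ewx : ~~ E w x0 by move: hne; rewrite ex0u.
    by exists (w, x0); rewrite /nonedge /= wx0 nx0w cwx0 ewx hk2.
  exists (x0, u); rewrite /nonedge /= x0u ex0u (negbTE nux0) cx0u /=; move: kpos; clear; lia.
have eqP3 : P3t E' = P3t E by apply/eqP; rewrite eqn_leq maxP // P3le.
have := minxi _ admE' eqP3; rewrite !xiE; apply/negP; rewrite -ltnNge.
apply: proper_card; apply/properP; split.
  apply/subsetP => -[[e1 e2] [f1 f2]].
  rewrite !inE /Qp /nonedge /E' /= => /and3P[/andP[Ee _] /and3P[fne nf12 nf21] lt].
  rewrite Ee fne lt /= andbT.
  apply/andP; split.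
    apply/negP => h; move: nf12; rewrite h /= negbK => /andP[/eqP ? /eqP ?]; subst.
    have := Hmax _ _ Ee; move: lt; clear; lia.
  apply/negP => h; move: nf21; rewrite h /= negbK => /andP[/eqP ? /eqP ?]; subst.
  have := Hmax _ _ Ee; have := cdist_sym uw; move: lt hkn; clear; lia.
exists ((u, w), f0).
  by rewrite inE /Qp /= Euw kE.
by rewrite inE /Qp /E' /= !eqxx andbF.
Qed.
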